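(* The kernel invariance algebra $\mathfrak g^\cap=\bigcap_V\mathfrak g_V$ of the class of equations $i\psi_t+\psi_{xx}+V(t,x)\psi=0$, the intersection running over all smooth complex-valued potentials $V$, is the two-dimensional algebra $\langle M,I\rangle$.
   Context: For a smooth complex-valued potential $V(t,x)$, $\mathfrak g_V$ is the maximal Lie invariance algebra of the linear Schrödinger equation $i\psi_t+\psi_{xx}+V(t,x)\psi=0$ ($\psi$ complex-valued, $t,x$ real), whose elements are vector fields on the space of $(t,x,\psi,\psi^* )$ with $\psi^*$ treated as an additional dependent variable. $M=i\psi\partial_\psi-i\psi^*\partial_{\psi^*}$, $I=\psi\partial_\psi+\psi^*\partial_{\psi^*}$. *)

(* Defs.v *)
From Stdlib Require Import Reals List.
From Coquelicot Require Import Coquelicot.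
Open Scope R_scope.

(* Real coordinates: psi = u + i v (so psi^* = u - i v), V = V1 + i V2.
   A (real) vector field on the space (t,x,psi,psi^* ) is
     Q = tau d_t + xi d_x + eta d_psi + eta^* d_psi^*,
   written in real coordinates as  tau d_t + xi d_x + al d_u + be d_v
   with eta = al + i be. *)

Definition F4 := R -> R -> R -> R -> R.
Definition F2 := R -> R -> R.

Definition pd (i : nat) (f : F4) : F4 := fun a b c d =>
  match i with
  | 0 => Derive (fun s => f s b c d) a
  | 1 => Derive (fun s => f a s c d) b
  | 2 => Derive (fun s => f a b s d) c
  | _ => Derive (fun s => f a b c s) d
  end.

Definition ex_pd (i : nat) (f : F4) (a b c d : R) : Prop :=
  match i with
  | 0 => ex_derive (fun s => f s b c d) a
  | 1 => ex_derive (fun s => f a s c d) b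
  | 2 => ex_derive (fun s => f a b s d) c
  | _ => ex_derive (fun s => f a b c s) d
  end.

Fixpoint pds (l : list nat) (f : F4) : F4 :=
  match l with
  | nil => f
  | i :: l' => pd i (pds l' f)
  end.

Definition uncurry4 (f : F4) (p : R * R * R * R) : R :=
  f (fst (fst (fst p))) (snd (fst (fst p))) (snd (fst p)) (snd p).

Definition Smooth4 (f : F4) : Prop :=
  forall l : list nat,
    (forall i a b c d, ex_pd i (pds l f) a b c d) /\
    (forall p, continuous (uncurry4 (pds l f)) p).

Definition Smooth2 (f : F2) : Prop := Smooth4 (fun t x _ _ => f t x).

Definition dt (f : F2) : F2 := fun t x => Derive (fun s => f s x) t.
Definition dx (f : F2) : F2 := fun t x => Derive (fun s => f t s) x.

Section Prolongation.
Variables (tau xi al be : F4) (u v : F2).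

Definition along (g : F4) : F2 := fun t x => g t x (u t x) (v t x).

(* characteristics W = eta - tau psi_t - xi psi_x, real and imaginary parts *)
Definition Wu : F2 := fun t x =>
  along al t x - along tau t x * dt u t x - along xi t x * dx u t x.
Definition Wv : F2 := fun t x =>
  along be t x - along tau t x * dt v t x - along xi t x * dx v t x.

(* prolongation coefficients phi^J = D_J W + tau w_{J t} + xi w_{J x},
   total derivatives computed along the section *)
Definition phi_t (W : F2) (w : F2) : F2 := fun t x =>
  dt W t x + along tau t x * dt (dt w) t x + along xi t x * dx (dt w) t x.
Definition phi_xx (W : F2) (w : F2) : F2 := fun t x =>
  dx (dx W) t x + along tau t x * dx (dx (dt w)) t x
                + along xi t x * dx (dx (dx w)) t x.
End Prolongation.

(* Real and imaginary parts of  i psi_t + psi_xx + V psi  along a section *)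
Definition Delta1 (V1 V2 u v : F2) : F2 := fun t x =>
  - dt v t x + dx (dx u) t x + V1 t x * u t x - V2 t x * v t x.
Definition Delta2 (V1 V2 u v : F2) : F2 := fun t x =>
  dt u t x + dx (dx v) t x + V1 t x * v t x + V2 t x * u t x.

(* pr^(2) Q applied to Delta1, Delta2, evaluated at the 2-jet of the section *)
Definition prDelta1 (V1 V2 : F2) (tau xi al be : F4) (u v : F2) : F2 :=
  fun t x =>
  - phi_t tau xi u v (Wv tau xi be u v) v t x
  + phi_xx tau xi u v (Wu tau xi al u v) u t x
  + (along u v tau t x * dt V1 t x + along u v xi t x * dx V1 t x) * u t x
  + V1 t x * along u v al t x
  - (along u v tau t x * dt V2 t x + along u v xi t x * dx V2 t x) * v t x
  - V2 t x * along u v be t x.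

Definition prDelta2 (V1 V2 : F2) (tau xi al be : F4) (u v : F2) : F2 :=
  fun t x =>
  phi_t tau xi u v (Wu tau xi al u v) u t x
  + phi_xx tau xi u v (Wv tau xi be u v) v t x
  + (along u v tau t x * dt V1 t x + along u v xi t x * dx V1 t x) * v t x
  + V1 t x * along u v be t x
  + (along u v tau t x * dt V2 t x + along u v xi t x * dx V2 t x) * u t x
  + V2 t x * along u v al t x.

(* Infinitesimal invariance criterion: pr^(2) Q (Delta) = 0 on the manifold
   Delta = 0 in the second-order jet space.  Every 2-jet is the 2-jet of a
   smooth (polynomial) section at a point, so quantifying over smooth
   sections and points is the same as quantifying over jet points. *)
Definition is_Lie_symmetry (V1 V2 : F2) (tau xi al be : F4) : Prop :=
  forall u v : F2, Smooth2 u -> Smooth2 v ->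
  forall t x : R,
    Delta1 V1 V2 u v t x = 0 -> Delta2 V1 V2 u v t x = 0 ->
    prDelta1 V1 V2 tau xi al be u v t x = 0 /\
    prDelta2 V1 V2 tau xi al be u v t x = 0.

Definition in_gV (V1 V2 : F2) (tau xi al be : F4) : Prop :=
  Smooth4 tau /\ Smooth4 xi /\ Smooth4 al /\ Smooth4 be /\
  is_Lie_symmetry V1 V2 tau xi al be.

Definition in_kernel (tau xi al be : F4) : Prop :=
  forall V1 V2 : F2, Smooth2 V1 -> Smooth2 V2 -> in_gV V1 V2 tau xi al be.

(* Q = c1 M + c2 I with M = i psi d_psi - i psi^* d_psi^*  (al = -v, be = u)
   and I = psi d_psi + psi^* d_psi^*  (al = u, be = v); real span. *)
Definition in_span_M_I (tau xi al be : F4) : Prop :=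
  exists c1 c2 : R, forall t x u v : R,
    tau t x u v = 0 /\ xi t x u v = 0 /\
    al t x u v = c1 * (- v) + c2 * u /\
    be t x u v = c1 * u + c2 * v.

(* Main.v *)
Require Import Defs.
From Stdlib Require Import Reals.
From Coquelicot Require Import Coquelicot.
From Stdlib Require Import Lra List.
From Coquelicot Require Import Derive_2d.
Open Scope R_scope.

Definition aff (k0 k1 k2 k3 k4 k5 : R) : F4 :=
  fun a b c d => k0 + k1*a + k2*b + k3*c + k4*d + k5*exp b.

Lemma cplus (f g : R*R*R*R -> R) p : continuous f p -> continuous g p -> continuous (fun q => f q + g q) p.
Proof. intros; apply (continuous_plus f g); auto. Qed.
Lemma cmult (f g : R*R*R*R -> R) p : continuous f p -> continuous g p -> continuous (fun q => f q * g q) p.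
Proof. intros; apply (continuous_mult f g); auto. Qed.
Lemma cconst (k : R) p : continuous (fun _ : R*R*R*R => k) p.
Proof. apply continuous_const. Qed.

Lemma cont_aff k0 k1 k2 k3 k4 k5 p : continuous (uncurry4 (aff k0 k1 k2 k3 k4 k5)) p.
Proof.
  unfold uncurry4, aff.
  assert (Hf : forall q : R*R*R*R, continuous (fun q : R*R*R*R => fst (fst (fst q))) q).
  { intro q. apply continuous_comp. apply continuous_comp; apply continuous_fst.
    apply continuous_fst. }
  assert (Hb : forall q : R*R*R*R, continuous (fun q : R*R*R*R => snd (fst (fst q))) q).
  { intro q. apply continuous_comp. apply continuous_comp; apply continuous_fst.
    apply continuous_snd. }
  assert (Hc : forall q : R*R*R*R, continuous (fun q : R*R*R*R => snd (fst q)) q).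
  { intro q. apply continuous_comp. apply continuous_fst. apply continuous_snd. }
  assert (Hd : forall q : R*R*R*R, continuous (fun q : R*R*R*R => snd q) q).
  { intro q. apply continuous_snd. }
  repeat (apply cplus || apply cmult || apply cconst || apply Hf || apply Hb || apply Hc || apply Hd).
  apply (continuous_comp (fun q : R*R*R*R => snd (fst (fst q))) exp). auto.
  apply (ex_derive_continuous (K:=R_AbsRing) (V:=R_NormedModule) exp). auto_derive. auto.
Qed.

Lemma pd_aff_gen (f : F4) k0 k1 k2 k3 k4 k5 i :
  (forall a b c d, f a b c d = aff k0 k1 k2 k3 k4 k5 a b c d) ->
  (forall a b c d, ex_pd i f a b c d) /\
  exists m0 m1 m2 m3 m4 m5, forall a b c d, pd i f a b c d = aff m0 m1 m2 m3 m4 m5 a b c d.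
Proof.
  intro Hf. split.
  - intros a b c d. destruct i as [|[|[|i]]]; simpl;
    (eapply ex_derive_ext; [intro s; symmetry; apply Hf|]); unfold aff; auto_derive; auto.
  - destruct i as [|[|[|i]]].
    + exists k1, 0, 0, 0, 0, 0. intros a b c d. simpl.
      rewrite (Derive_ext _ (fun s => aff k0 k1 k2 k3 k4 k5 s b c d)) by (intro; apply Hf).
      apply is_derive_unique. unfold aff. auto_derive; auto. ring.
    + exists k2, 0, 0, 0, 0, k5. intros a b c d. simpl.
      rewrite (Derive_ext _ (fun s => aff k0 k1 k2 k3 k4 k5 a s c d)) by (intro; apply Hf).
      apply is_derive_unique. unfold aff. auto_derive; auto. ring.
    + exists k3, 0, 0, 0, 0, 0. intros a b c d. simpl.
      rewrite (Derive_ext _ (fun s => aff k0 k1 k2 k3 k4 k5 a b s d)) by (intro; apply Hf).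
      apply is_derive_unique. unfold aff. auto_derive; auto. ring.
    + exists k4, 0, 0, 0, 0, 0. intros a b c d. simpl.
      rewrite (Derive_ext _ (fun s => aff k0 k1 k2 k3 k4 k5 a b c s)) by (intro; apply Hf).
      apply is_derive_unique. unfold aff. auto_derive; auto. ring.
Qed.

Lemma Smooth4_aff (f : F4) k0 k1 k2 k3 k4 k5 :
  (forall a b c d, f a b c d = aff k0 k1 k2 k3 k4 k5 a b c d) -> Smooth4 f.
Proof.
  intros Hf l.
  assert (H : exists m0 m1 m2 m3 m4 m5, forall a b c d, pds l f a b c d = aff m0 m1 m2 m3 m4 m5 a b c d).
  { induction l as [|i l IH].
    - exists k0, k1, k2, k3, k4, k5. exact Hf.
    - destruct IH as (m0 & m1 & m2 & m3 & m4 & m5 & Hm).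
      exact (proj2 (pd_aff_gen (pds l f) m0 m1 m2 m3 m4 m5 i Hm)). }
  destruct H as (m0 & m1 & m2 & m3 & m4 & m5 & Hm).
  split.
  - intros i. exact (proj1 (pd_aff_gen _ m0 m1 m2 m3 m4 m5 i Hm)).
  - intro p. apply (continuous_ext (uncurry4 (aff m0 m1 m2 m3 m4 m5))).
    intro q. unfold uncurry4. symmetry. apply Hm.
    apply cont_aff.
Qed.

Lemma cpt_of_ex (f : R -> R) z : ex_derive f z -> continuity_pt f z.
Proof. intro H. apply continuity_pt_filterlim. apply (ex_derive_continuous (K:=R_AbsRing) (V:=R_NormedModule)). exact H. Qed.

Lemma diff2 (f : R -> R -> R) x y :
  (forall u v, ex_derive (fun z => f z v) u) ->
  continuity_2d_pt (fun u v => Derive (fun z => f z v) u) x y ->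
  ex_derive (fun z => f x z) y ->
  differentiable_pt_lim f x y (Derive (fun z => f z y) x) (Derive (fun z => f x z) y).
Proof.
  intros Hd Hc Hy eps.
  set (e2 := pos_div_2 eps).
  destruct (Hc e2) as [d1 Hd1].
  pose proof (Derive_correct _ _ Hy) as Hy'.
  apply is_derive_Reals in Hy'.
  destruct (Hy' e2 (cond_pos e2)) as [d2 Hd2].
  assert (Hm : 0 < Rmin d1 d2) by (apply Rmin_pos; apply cond_pos).
  exists (mkposreal _ Hm). simpl. intros u v Hu Hv.
  destruct (MVT_gen (fun z => f z v) x u (fun z => Derive (fun z' => f z' v) z)) as [c [Hc1 Hc2]].
  { intros z _. apply Derive_correct. apply Hd. }
  { intros z _. apply cpt_of_ex. apply Hd. }
  assert (Hcx : Rabs (c - x) <= Rabs (u - x)).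
  { revert Hc1. unfold Rmin, Rmax. destruct (Rle_dec x u); intros [H1 H2];
    unfold Rabs; destruct (Rcase_abs (c - x)); destruct (Rcase_abs (u - x)); lra. }
  assert (Hu1 : Rabs (u - x) < d1) by (eapply Rlt_le_trans; [exact Hu| apply Rmin_l]).
  assert (Hv1 : Rabs (v - y) < d1) by (eapply Rlt_le_trans; [exact Hv| apply Rmin_l]).
  assert (Hv2 : Rabs (v - y) < d2) by (eapply Rlt_le_trans; [exact Hv| apply Rmin_r]).
  assert (B1 : Rabs (Derive (fun z' => f z' v) c - Derive (fun z' => f z' y) x) < e2).
  { apply Hd1; lra. }
  assert (B2 : Rabs (f x v - f x y - Derive (fun z => f x z) y * (v - y)) <= e2 * Rabs (v - y)).
  { destruct (Req_dec v y) as [E|E].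
    - subst. replace (f x y - f x y - Derive (fun z => f x z) y * (y - y)) with 0 by ring.
      rewrite Rabs_R0. apply Rmult_le_pos. left; apply cond_pos. apply Rabs_pos.
    - assert (Hh : v - y <> 0) by lra.
      pose proof (Hd2 (v - y) Hh Hv2) as H.
      replace (y + (v - y)) with v in H by ring.
      replace (f x v - f x y - Derive (fun z => f x z) y * (v - y)) with
        (((f x v - f x y) / (v - y) - Derive (fun z => f x z) y) * (v - y)) by (field; auto).
      rewrite Rabs_mult. apply Rmult_le_compat_r. apply Rabs_pos. left; exact H. }
  replace (f u v - f x y - (Derive (fun z => f z y) x * (u - x) + Derive (fun z => f x z) y * (v - y)))
    with ((Derive (fun z' => f z' v) c - Derive (fun z' => f z' y) x) * (u - x)
          + (f x v - f x y - Derive (fun z => f x z) y * (v - y))) by (simpl in Hc2; assert (Hc3 : f u v = f x v + Derive (fun z' => f z' v) c * (u - x)) by lra; rewrite Hc3; ring).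
  eapply Rle_trans. apply Rabs_triang.
  rewrite Rabs_mult.
  assert (A1 : Rabs (Derive (fun z' => f z' v) c - Derive (fun z' => f z' y) x) * Rabs (u - x) <= e2 * Rabs (u - x)).
  { apply Rmult_le_compat_r. apply Rabs_pos. lra. }
  pose proof (Rmax_l (Rabs (u - x)) (Rabs (v - y))).
  pose proof (Rmax_r (Rabs (u - x)) (Rabs (v - y))).
  assert (He : pos eps = 2 * e2) by (unfold e2; simpl; field).
  rewrite He.
  assert (0 < e2) by apply cond_pos.
  nra.
Qed.

Lemma cont4 (h : F4) a b c d : continuous (uncurry4 h) (a,b,c,d) ->
  forall eps : posreal, exists delta : posreal, forall a' b' c' d',
    Rabs (a' - a) < delta -> Rabs (b' - b) < delta -> Rabs (c' - c) < delta -> Rabs (d' - d) < delta ->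
    Rabs (h a' b' c' d' - h a b c d) < eps.
Proof.
  intros H eps.
  destruct (proj1 (filterlim_locally _ _) H eps) as [del Hdel].
  exists del. intros a' b' c' d' H1 H2 H3 H4.
  specialize (Hdel (a',b',c',d')).
  unfold uncurry4 in Hdel; simpl in Hdel.
  apply Hdel. repeat split; assumption.
Qed.

Lemma chain02 (g : F4) x c d t0 : Smooth4 g ->
  is_derive (fun s => g s x (c + (s - t0)) d) t0 (pd 0 g t0 x c d + pd 2 g t0 x c d).
Proof.
  intro Hg.
  set (f1 := fun a w => g a x w d).
  assert (Hdiff : differentiable_pt_lim f1 t0 (c + (t0 - t0))
            (Derive (fun z => f1 z (c + (t0 - t0))) t0) (Derive (fun z => f1 t0 z) (c + (t0 - t0)))).
  { apply diff2.
    - intros u v. exact (proj1 (Hg nil) 0%nat u x v d).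
    - intro eps. destruct (cont4 (pds (0%nat :: nil) g) t0 x (c + (t0 - t0)) d
        (proj2 (Hg (0%nat :: nil)) _) eps) as [del Hdel].
      exists del. intros u v Hu Hv. apply Hdel; auto; rewrite Rminus_eq_0, Rabs_R0; apply cond_pos.
    - exact (proj1 (Hg nil) 2%nat t0 x (c + (t0 - t0)) d). }
  pose proof (derivable_pt_lim_comp_2d f1 (fun s => s) (fun s => c + (s - t0)) t0 _ _ 1 1 Hdiff) as H.
  apply is_derive_Reals.
  replace (c + (t0 - t0)) with c in H by ring.
  replace (pd 0 g t0 x c d + pd 2 g t0 x c d) with
    (Derive (fun z => f1 z c) t0 * 1 + Derive (fun z => f1 t0 z) c * 1) by (unfold f1, pd; simpl; ring).
  apply H.
  - apply is_derive_Reals. auto_derive; auto.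
  - apply is_derive_Reals. auto_derive; auto; ring.
Qed.

Lemma chain03 (g : F4) x c d t0 : Smooth4 g ->
  is_derive (fun s => g s x c (d + (s - t0))) t0 (pd 0 g t0 x c d + pd 3 g t0 x c d).
Proof.
  intro Hg.
  set (f1 := fun a w => g a x c w).
  assert (Hdiff : differentiable_pt_lim f1 t0 (d + (t0 - t0))
            (Derive (fun z => f1 z (d + (t0 - t0))) t0) (Derive (fun z => f1 t0 z) (d + (t0 - t0)))).
  { apply diff2.
    - intros u v. exact (proj1 (Hg nil) 0%nat u x c v).
    - intro eps. destruct (cont4 (pds (0%nat :: nil) g) t0 x c (d + (t0 - t0))
        (proj2 (Hg (0%nat :: nil)) _) eps) as [del Hdel].
      exists del. intros u v Hu Hv. apply Hdel; auto; rewrite Rminus_eq_0, Rabs_R0; apply cond_pos.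
    - exact (proj1 (Hg nil) 3%nat t0 x c (d + (t0 - t0))). }
  pose proof (derivable_pt_lim_comp_2d f1 (fun s => s) (fun s => d + (s - t0)) t0 _ _ 1 1 Hdiff) as H.
  apply is_derive_Reals.
  replace (d + (t0 - t0)) with d in H by ring.
  replace (pd 0 g t0 x c d + pd 3 g t0 x c d) with
    (Derive (fun z => f1 z d) t0 * 1 + Derive (fun z => f1 t0 z) d * 1) by (unfold f1, pd; simpl; ring).
  apply H.
  - apply is_derive_Reals. auto_derive; auto.
  - apply is_derive_Reals. auto_derive; auto; ring.
Qed.

Lemma zero_der (f : R -> R) a b : (forall s, is_derive f s 0) -> f a = f b.
Proof.
  intro H.
  destruct (MVT_gen f a b (fun _ => 0)) as [c [_ Hc]].
  { intros; apply H. }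
  { intros z _. apply cpt_of_ex. eexists; apply H. }
  lra.
Qed.

Lemma cont_origin (f : R -> R) k : ex_derive f 0 -> (forall s, s <> 0 -> f s = k * s) -> f 0 = 0.
Proof.
  intros Hd Hs.
  assert (H1 : is_lim f 0 (f 0)).
  { apply (is_lim_comp_continuous (fun y => y) f 0 0). apply is_lim_id.
    apply (ex_derive_continuous (K:=R_AbsRing) (V:=R_NormedModule)). exact Hd. }
  assert (H2 : is_lim f 0 (Rbar_mult k 0)).
  { apply (is_lim_ext_loc (fun y => k * y)).
    - exists (mkposreal 1 Rlt_0_1). intros y _ Hy. symmetry. apply Hs. exact Hy.
    - apply is_lim_scal_l. apply is_lim_id. }
  apply is_lim_unique in H1. apply is_lim_unique in H2.
  rewrite H1 in H2. simpl in H2. injection H2. intro E. rewrite E. ring.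
Qed.

Lemma dt_ext (f g : F2) : (forall t x, f t x = g t x) -> forall t x, dt f t x = dt g t x.
Proof. intros H t x. unfold dt. apply Derive_ext. intro; apply H. Qed.
Lemma dx_ext (f g : F2) : (forall t x, f t x = g t x) -> forall t x, dx f t x = dx g t x.
Proof. intros H t x. unfold dx. apply Derive_ext. intro; apply H. Qed.
Lemma dxx_ext (f g : F2) : (forall t x, f t x = g t x) -> forall t x, dx (dx f) t x = dx (dx g) t x.
Proof. intros H. apply dx_ext. apply dx_ext. exact H. Qed.

Definition Red1 (V1 V2 : F2) (al be : F4) (u v : F2) t x :=
  - dt (along u v be) t x + dx (dx (along u v al)) t x
  + V1 t x * along u v al t x - V2 t x * along u v be t x.
Definition Red2 (V1 V2 : F2) (al be : F4) (u v : F2) t x :=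
  dt (along u v al) t x + dx (dx (along u v be)) t x
  + V1 t x * along u v be t x + V2 t x * along u v al t x.

Section Red.
Variables (tau xi al be : F4).
Hypothesis Ht : forall a b c d, tau a b c d = 0.
Hypothesis Hx : forall a b c d, xi a b c d = 0.

Lemma Wu0 u v : forall t x, Wu tau xi al u v t x = along u v al t x.
Proof. intros. unfold Wu, along. rewrite Ht, Hx. ring. Qed.
Lemma Wv0 u v : forall t x, Wv tau xi be u v t x = along u v be t x.
Proof. intros. unfold Wv, along. rewrite Ht, Hx. ring. Qed.

Lemma red1 V1 V2 u v t x :
  prDelta1 V1 V2 tau xi al be u v t x = Red1 V1 V2 al be u v t x.
Proof.
  unfold prDelta1, Red1, phi_t, phi_xx.
  rewrite (dt_ext _ _ (Wv0 u v)), (dxx_ext _ _ (Wu0 u v)).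
  assert (A1 : along u v tau t x = 0) by (unfold along; apply Ht).
  assert (A2 : along u v xi t x = 0) by (unfold along; apply Hx).
  rewrite A1, A2. ring.
Qed.

Lemma red2 V1 V2 u v t x :
  prDelta2 V1 V2 tau xi al be u v t x = Red2 V1 V2 al be u v t x.
Proof.
  unfold prDelta2, Red2, phi_t, phi_xx.
  rewrite (dt_ext _ _ (Wu0 u v)), (dxx_ext _ _ (Wv0 u v)).
  assert (A1 : along u v tau t x = 0) by (unfold along; apply Ht).
  assert (A2 : along u v xi t x = 0) by (unfold along; apply Hx).
  rewrite A1, A2. ring.
Qed.
End Red.

Lemma ex_dt (u : F2) : Smooth2 u -> forall t x, ex_derive (fun s => u s x) t.
Proof. intros Hu t x. exact (proj1 (Hu nil) 0%nat t x 0 0). Qed.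
Lemma ex_dx (u : F2) : Smooth2 u -> forall t x, ex_derive (fun s => u t s) x.
Proof. intros Hu t x. exact (proj1 (Hu nil) 1%nat t x 0 0). Qed.
Lemma ex_dxx (u : F2) : Smooth2 u -> forall t x, ex_derive (fun s => dx u t s) x.
Proof. intros Hu t x. exact (proj1 (Hu (1%nat :: nil)) 1%nat t x 0 0). Qed.

Lemma dt_lin (u v : F2) a b : (forall t x, ex_derive (fun s => u s x) t) ->
  (forall t x, ex_derive (fun s => v s x) t) ->
  forall t x, dt (fun t x => a * u t x + b * v t x) t x = a * dt u t x + b * dt v t x.
Proof.
  intros Hu Hv t x. unfold dt. apply is_derive_unique.
  apply (is_derive_plus (fun s => a * u s x) (fun s => b * v s x)).
  apply (is_derive_scal (fun s => u s x)). apply Derive_correct. apply Hu.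
  apply (is_derive_scal (fun s => v s x)). apply Derive_correct. apply Hv.
Qed.
Lemma dx_lin (u v : F2) a b : (forall t x, ex_derive (fun s => u t s) x) ->
  (forall t x, ex_derive (fun s => v t s) x) ->
  forall t x, dx (fun t x => a * u t x + b * v t x) t x = a * dx u t x + b * dx v t x.
Proof.
  intros Hu Hv t x. unfold dx. apply is_derive_unique.
  apply (is_derive_plus (fun s => a * u t s) (fun s => b * v t s)).
  apply (is_derive_scal (fun s => u t s)). apply Derive_correct. apply Hu.
  apply (is_derive_scal (fun s => v t s)). apply Derive_correct. apply Hv.
Qed.

Theorem backward (tau xi al be : F4) :
  in_span_M_I tau xi al be -> in_kernel tau xi al be.
Proof.
  intros [c1 [c2 H]] V1 V2 HV1 HV2.
  assert (Ht : forall a b c d, tau a b c d = 0) by (intros; apply H).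
  assert (Hx : forall a b c d, xi a b c d = 0) by (intros; apply H).
  assert (Ha : forall a b c d, al a b c d = c1 * (- d) + c2 * c) by (intros; apply H).
  assert (Hb : forall a b c d, be a b c d = c1 * c + c2 * d) by (intros; apply H).
  split; [|split; [|split; [|split]]].
  - apply (Smooth4_aff _ 0 0 0 0 0 0). intros; unfold aff; rewrite Ht; ring.
  - apply (Smooth4_aff _ 0 0 0 0 0 0). intros; unfold aff; rewrite Hx; ring.
  - apply (Smooth4_aff _ 0 0 0 c2 (-c1) 0). intros; unfold aff; rewrite Ha; ring.
  - apply (Smooth4_aff _ 0 0 0 c1 c2 0). intros; unfold aff; rewrite Hb; ring.
  - intros u v Hu Hv t x D1 D2.
    rewrite (red1 tau xi al be Ht Hx), (red2 tau xi al be Ht Hx).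
    assert (EA : forall t x, along u v al t x = c2 * u t x + (- c1) * v t x)
      by (intros; unfold along; rewrite Ha; ring).
    assert (EB : forall t x, along u v be t x = c1 * u t x + c2 * v t x)
      by (intros; unfold along; rewrite Hb; ring).
    unfold Red1, Red2.
    rewrite (dt_ext _ _ EA), (dt_ext _ _ EB), (dxx_ext _ _ EA), (dxx_ext _ _ EB), EA, EB.
    rewrite !dt_lin by (apply ex_dt; auto).
    rewrite (dx_ext _ _ (dx_lin u v _ _ (ex_dx u Hu) (ex_dx v Hv))).
    rewrite (dx_ext _ _ (dx_lin u v c1 c2 (ex_dx u Hu) (ex_dx v Hv))).
    rewrite !dx_lin by (apply ex_dxx; auto).
    unfold Delta1, Delta2 in *.
    split; nra.
Qed.

Lemma dt_Z t x : dt (fun _ _ => 0) t x = 0.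
Proof. unfold dt. apply Derive_const. Qed.
Lemma dx_Z t x : dx (fun _ _ => 0) t x = 0.
Proof. unfold dx. apply Derive_const. Qed.

Lemma split1 V1 V2 tau xi al be u v t x :
  prDelta1 V1 V2 tau xi al be u v t x =
  prDelta1 (fun _ _ => 0) (fun _ _ => 0) tau xi al be u v t x
  + (along u v tau t x * dt V1 t x + along u v xi t x * dx V1 t x) * u t x
  + V1 t x * along u v al t x
  - (along u v tau t x * dt V2 t x + along u v xi t x * dx V2 t x) * v t x
  - V2 t x * along u v be t x.
Proof. unfold prDelta1. rewrite dt_Z, dx_Z. ring. Qed.

Lemma Smooth2_const k : Smooth2 (fun _ _ => k).
Proof. apply (Smooth4_aff _ k 0 0 0 0 0). intros; unfold aff; ring. Qed.
Lemma Smooth2_T t0 : Smooth2 (fun t _ => t - t0).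
Proof. apply (Smooth4_aff _ (-t0) 1 0 0 0 0). intros; unfold aff; ring. Qed.
Lemma Smooth2_X x0 : Smooth2 (fun _ x => x - x0).
Proof. apply (Smooth4_aff _ (-x0) 0 1 0 0 0). intros; unfold aff; ring. Qed.

Lemma dt_const k t x : dt (fun _ _ => k) t x = 0.
Proof. unfold dt. apply Derive_const. Qed.
Lemma dxx_const k t x : dx (dx (fun _ _ => k)) t x = 0.
Proof. rewrite (dx_ext _ (fun _ _ => 0)). apply dx_Z.
  intros; unfold dx; apply Derive_const. Qed.

Section Fwd.
Variables (tau xi al be : F4).
Hypothesis HK : in_kernel tau xi al be.

Lemma sym V1 V2 u v t x : Smooth2 V1 -> Smooth2 V2 -> Smooth2 u -> Smooth2 v ->
  Delta1 V1 V2 u v t x = 0 -> Delta2 V1 V2 u v t x = 0 ->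
  prDelta1 V1 V2 tau xi al be u v t x = 0 /\ prDelta2 V1 V2 tau xi al be u v t x = 0.
Proof. intros H1 H2 H3 H4 D1 D2. destruct (HK V1 V2 H1 H2) as (_&_&_&_&HL). apply HL; auto. Qed.

Lemma step1 t0 x0 u0 v0 : (u0 <> 0 \/ v0 <> 0) -> tau t0 x0 u0 v0 = 0 /\ xi t0 x0 u0 v0 = 0.
Proof.
  intro Huv.
  set (U := fun _ _ : R => u0). set (W := fun _ _ : R => v0).
  assert (SU : Smooth2 U) by apply Smooth2_const.
  assert (SW : Smooth2 W) by apply Smooth2_const.
  assert (D : forall V1 V2 : F2, V1 t0 x0 = 0 -> V2 t0 x0 = 0 ->
     Delta1 V1 V2 U W t0 x0 = 0 /\ Delta2 V1 V2 U W t0 x0 = 0).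
  { intros V1 V2 E1 E2. unfold Delta1, Delta2, U, W. rewrite E1, E2, !dt_const, !dxx_const. split; ring. }
  assert (P : forall V1 V2 : F2, Smooth2 V1 -> Smooth2 V2 -> V1 t0 x0 = 0 -> V2 t0 x0 = 0 ->
     prDelta1 V1 V2 tau xi al be U W t0 x0 = 0).
  { intros V1 V2 S1 S2 E1 E2. destruct (D V1 V2 E1 E2). apply (sym V1 V2 U W t0 x0); auto. }
  pose proof (P _ _ (Smooth2_const 0) (Smooth2_const 0) eq_refl eq_refl) as P0.
  assert (ET : (fun t _ : R => t - t0) t0 x0 = 0) by (simpl; ring).
  assert (EX : (fun _ x : R => x - x0) t0 x0 = 0) by (simpl; ring).
  pose proof (P _ _ (Smooth2_T t0) (Smooth2_const 0) ET eq_refl) as P1.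
  pose proof (P _ _ (Smooth2_const 0) (Smooth2_T t0) eq_refl ET) as P2.
  pose proof (P _ _ (Smooth2_X x0) (Smooth2_const 0) EX eq_refl) as P3.
  pose proof (P _ _ (Smooth2_const 0) (Smooth2_X x0) eq_refl EX) as P4.
  rewrite split1 in P1, P2, P3, P4.
  assert (dtT : dt (fun t _ : R => t - t0) t0 x0 = 1).
  { unfold dt. apply is_derive_unique. auto_derive; auto. }
  assert (dxT : dx (fun t _ : R => t - t0) t0 x0 = 0).
  { unfold dx. apply is_derive_unique. auto_derive; auto. }
  assert (dtX : dt (fun _ x : R => x - x0) t0 x0 = 0).
  { unfold dt. apply is_derive_unique. auto_derive; auto. }
  assert (dxX : dx (fun _ x : R => x - x0) t0 x0 = 1).
  { unfold dx. apply is_derive_unique. auto_derive; auto. }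
  rewrite P0, dt_Z, dx_Z in P1, P2, P3, P4.
  rewrite dtT, dxT in P1. rewrite dtT, dxT in P2. rewrite dtX, dxX in P3. rewrite dtX, dxX in P4.
  unfold along, U, W in P1, P2, P3, P4.
  destruct Huv as [Hu|Hv]; split.
  - apply (Rmult_eq_reg_r u0); [|exact Hu]. lra.
  - apply (Rmult_eq_reg_r u0); [|exact Hu]. lra.
  - apply (Rmult_eq_reg_r v0); [|exact Hv]. lra.
  - apply (Rmult_eq_reg_r v0); [|exact Hv]. lra.
Qed.

Lemma smooths : Smooth4 tau /\ Smooth4 xi /\ Smooth4 al /\ Smooth4 be.
Proof.
  destruct (HK (fun _ _ => 0) (fun _ _ => 0) (Smooth2_const 0) (Smooth2_const 0)) as (A&B&C&D&_).
  auto.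
Qed.

Lemma tau0 : forall a b c d, tau a b c d = 0.
Proof.
  intros a b c d.
  destruct (Req_dec c 0) as [Ec|Ec]; [destruct (Req_dec d 0) as [Ed|Ed]|].
  - subst. apply (cont_origin (fun s => tau a b s 0) 0).
    + destruct smooths as (S&_). exact (proj1 (S nil) 2%nat a b 0 0).
    + intros s Hs. rewrite (proj1 (step1 a b s 0 (or_introl Hs))). ring.
  - apply step1; auto.
  - apply step1; auto.
Qed.

Lemma xi0 : forall a b c d, xi a b c d = 0.
Proof.
  intros a b c d.
  destruct (Req_dec c 0) as [Ec|Ec]; [destruct (Req_dec d 0) as [Ed|Ed]|].
  - subst. apply (cont_origin (fun s => xi a b s 0) 0).
    + destruct smooths as (_&S&_). exact (proj1 (S nil) 2%nat a b 0 0).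
    + intros s Hs. rewrite (proj2 (step1 a b s 0 (or_introl Hs))). ring.
  - apply step1; auto.
  - apply step1; auto.
Qed.
End Fwd.

Section Sec.
Variables (t0 x0 u0 v0 : R).
Let U1 : F2 := fun t _ => u0 + (t - t0).
Let W1 : F2 := fun t _ => v0 + (t - t0).
Let Uc : F2 := fun _ _ => u0.
Let Wc : F2 := fun _ _ => v0.

Lemma dt_U1 g : Smooth4 g -> dt (along U1 Wc g) t0 x0 = pd 0 g t0 x0 u0 v0 + pd 2 g t0 x0 u0 v0.
Proof. intro Hg. unfold dt, along, U1, Wc. apply is_derive_unique. apply (chain02 g x0 u0 v0 t0 Hg). Qed.
Lemma dt_W1 g : Smooth4 g -> dt (along Uc W1 g) t0 x0 = pd 0 g t0 x0 u0 v0 + pd 3 g t0 x0 u0 v0.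
Proof. intro Hg. unfold dt, along, Uc, W1. apply is_derive_unique. apply (chain03 g x0 u0 v0 t0 Hg). Qed.
Lemma dt_c g : dt (along Uc Wc g) t0 x0 = pd 0 g t0 x0 u0 v0.
Proof. reflexivity. Qed.
Lemma dxx_U1 g : dx (dx (along U1 Wc g)) t0 x0 = pd 1 (pd 1 g) t0 x0 u0 v0.
Proof. unfold dx, along, pd, U1, Wc. cbv beta. replace (u0 + (t0 - t0)) with u0 by ring. reflexivity. Qed.
Lemma dxx_W1 g : dx (dx (along Uc W1 g)) t0 x0 = pd 1 (pd 1 g) t0 x0 u0 v0.
Proof. unfold dx, along, pd, Uc, W1. cbv beta. replace (v0 + (t0 - t0)) with v0 by ring. reflexivity. Qed.
Lemma dxx_c g : dx (dx (along Uc Wc g)) t0 x0 = pd 1 (pd 1 g) t0 x0 u0 v0.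
Proof. reflexivity. Qed.
Lemma al_U1 g : along U1 Wc g t0 x0 = g t0 x0 u0 v0.
Proof. unfold along, U1, Wc. replace (u0 + (t0 - t0)) with u0 by ring. reflexivity. Qed.
Lemma al_W1 g : along Uc W1 g t0 x0 = g t0 x0 u0 v0.
Proof. unfold along, Uc, W1. replace (v0 + (t0 - t0)) with v0 by ring. reflexivity. Qed.

Lemma dxx_tonly (f : R -> R) t x : dx (dx (fun t _ => f t)) t x = 0.
Proof. rewrite (dx_ext _ (fun _ _ => 0)). apply dx_Z. intros; unfold dx; apply Derive_const. Qed.
Lemma dt_tlin a t : dt (fun t _ => a + (t - t0)) t x0 = 1.
Proof. unfold dt. apply is_derive_unique. auto_derive; auto; ring. Qed.

Lemma Del_U1 k1 k2 : Delta1 (fun _ _ => k1) (fun _ _ => k2) U1 Wc t0 x0 = k1 * u0 - k2 * v0 /\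
                     Delta2 (fun _ _ => k1) (fun _ _ => k2) U1 Wc t0 x0 = 1 + k1 * v0 + k2 * u0.
Proof.
  unfold Delta1, Delta2, U1, Wc. cbv beta. rewrite ?dt_tlin, ?dxx_tonly, ?dt_const, ?dxx_tonly, ?dxx_const.
  split; ring.
Qed.
Lemma Del_W1 k1 k2 : Delta1 (fun _ _ => k1) (fun _ _ => k2) Uc W1 t0 x0 = -1 + k1 * u0 - k2 * v0 /\
                     Delta2 (fun _ _ => k1) (fun _ _ => k2) Uc W1 t0 x0 = k1 * v0 + k2 * u0.
Proof.
  unfold Delta1, Delta2, W1, Uc. cbv beta. rewrite ?dt_tlin, ?dxx_tonly, ?dt_const, ?dxx_tonly, ?dxx_const.
  split; ring.
Qed.
End Sec.


Lemma dxe (h : F2) t x : ex_derive (fun s => h t s) x ->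
  dx (fun t x => h t x * exp x) t x = (dx h t x + h t x) * exp x.
Proof. intro H. unfold dx. apply is_derive_unique. auto_derive; auto. ring. Qed.

Lemma dxplus (f g : F2) t x : ex_derive (fun s => f t s) x -> ex_derive (fun s => g t s) x ->
  dx (fun t x => f t x + g t x) t x = dx f t x + dx g t x.
Proof. intros A B. unfold dx. apply is_derive_unique. auto_derive; auto; ring. Qed.

Lemma dxxe (h : F2) t x : (forall t x, ex_derive (fun s => h t s) x) ->
  (forall t x, ex_derive (fun s => dx h t s) x) ->
  dx (dx (fun t x => h t x * exp x)) t x = (dx (dx h) t x + 2 * dx h t x + h t x) * exp x.
Proof.
  intros H1 H2.
  rewrite (dx_ext _ (fun t x => (dx h t x + h t x) * exp x)) by (intros; apply dxe; auto).
  rewrite (dxe (fun t x => dx h t x + h t x)).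
  rewrite dxplus by auto. ring.
  apply (ex_derive_plus (fun s => dx h t s) (fun s => h t s)); auto.
Qed.

Lemma dte (h : F2) t x : dt (fun t x => h t x * exp x) t x = dt h t x * exp x.
Proof. unfold dt. apply Derive_scal_l. Qed.

Lemma is_derive_zero (f : R -> R) x : ex_derive f x -> Derive f x = 0 -> is_derive f x 0.
Proof. intros H E. rewrite <- E. apply Derive_correct. exact H. Qed.

Section Fwd2.
Variables (tau xi al be : F4).
Hypothesis HK : in_kernel tau xi al be.
Let Ht := tau0 tau xi al be HK.
Let Hx := xi0 tau xi al be HK.
Let Sal : Smooth4 al := proj1 (proj2 (proj2 (smooths tau xi al be HK))).
Let Sbe : Smooth4 be := proj2 (proj2 (proj2 (smooths tau xi al be HK))).

Lemma symR V1 V2 u v t x : Smooth2 V1 -> Smooth2 V2 -> Smooth2 u -> Smooth2 v ->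
  Delta1 V1 V2 u v t x = 0 -> Delta2 V1 V2 u v t x = 0 ->
  Red1 V1 V2 al be u v t x = 0 /\ Red2 V1 V2 al be u v t x = 0.
Proof.
  intros. rewrite <- (red1 tau xi al be Ht Hx), <- (red2 tau xi al be Ht Hx).
  apply (sym tau xi al be HK); auto.
Qed.

Lemma Smooth2_tlin a : forall t0, Smooth2 (fun t _ => a + (t - t0)).
Proof. intro t0. apply (Smooth4_aff _ (a - t0) 1 0 0 0 0). intros; unfold aff; ring. Qed.

Lemma step2 t0 x0 u0 v0 : u0 * u0 + v0 * v0 <> 0 ->
  (u0*u0+v0*v0) * pd 2 al t0 x0 u0 v0 = u0 * al t0 x0 u0 v0 + v0 * be t0 x0 u0 v0 /\
  (u0*u0+v0*v0) * pd 3 al t0 x0 u0 v0 = v0 * al t0 x0 u0 v0 - u0 * be t0 x0 u0 v0 /\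
  (u0*u0+v0*v0) * pd 2 be t0 x0 u0 v0 = u0 * be t0 x0 u0 v0 - v0 * al t0 x0 u0 v0 /\
  (u0*u0+v0*v0) * pd 3 be t0 x0 u0 v0 = u0 * al t0 x0 u0 v0 + v0 * be t0 x0 u0 v0.
Proof.
  intro Hr. set (r := u0*u0+v0*v0) in *.
  destruct (symR (fun _ _ => 0) (fun _ _ => 0) (fun _ _ => u0) (fun _ _ => v0) t0 x0
    (Smooth2_const 0) (Smooth2_const 0) (Smooth2_const u0) (Smooth2_const v0)) as [E1 E2].
  { unfold Delta1. rewrite dt_const, dxx_const. ring. }
  { unfold Delta2. rewrite dt_const, dxx_const. ring. }
  destruct (Del_U1 t0 x0 u0 v0 (-v0/r) (-u0/r)) as [D1 D2].
  destruct (symR (fun _ _ => -v0/r) (fun _ _ => -u0/r) (fun t _ => u0 + (t - t0)) (fun _ _ => v0) t0 x0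
    (Smooth2_const _) (Smooth2_const _) (Smooth2_tlin u0 t0) (Smooth2_const v0)) as [Q1 Q2].
  { rewrite D1. unfold r. field. exact Hr. }
  { rewrite D2. unfold r. field. exact Hr. }
  destruct (Del_W1 t0 x0 u0 v0 (u0/r) (-v0/r)) as [D3 D4].
  destruct (symR (fun _ _ => u0/r) (fun _ _ => -v0/r) (fun _ _ => u0) (fun t _ => v0 + (t - t0)) t0 x0
    (Smooth2_const _) (Smooth2_const _) (Smooth2_const u0) (Smooth2_tlin v0 t0)) as [Q3 Q4].
  { rewrite D3. unfold r. field. exact Hr. }
  { rewrite D4. unfold r. field. exact Hr. }
  unfold Red1, Red2 in E1, E2, Q1, Q2, Q3, Q4.
  rewrite dt_c, dxx_c in E1. rewrite dt_c, dxx_c in E2.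
  rewrite (dt_U1 _ _ _ _ be Sbe), dxx_U1, al_U1, al_U1 in Q1.
  rewrite (dt_U1 _ _ _ _ al Sal), dxx_U1, al_U1, al_U1 in Q2.
  rewrite (dt_W1 _ _ _ _ be Sbe), dxx_W1, al_W1, al_W1 in Q3.
  rewrite (dt_W1 _ _ _ _ al Sal), dxx_W1, al_W1, al_W1 in Q4.
  unfold along in E1, E2. clear D1 D2 D3 D4.
  set (A := al t0 x0 u0 v0) in *. set (B := be t0 x0 u0 v0) in *.
  set (a2 := pd 2 al t0 x0 u0 v0) in *. set (a3 := pd 3 al t0 x0 u0 v0) in *.
  set (b2 := pd 2 be t0 x0 u0 v0) in *. set (b3 := pd 3 be t0 x0 u0 v0) in *.
  set (a0 := pd 0 al t0 x0 u0 v0) in *. set (b0 := pd 0 be t0 x0 u0 v0) in *.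
  set (a11 := pd 1 (pd 1 al) t0 x0 u0 v0) in *. set (b11 := pd 1 (pd 1 be) t0 x0 u0 v0) in *.
  assert (F1 : a2 = - ((-v0/r) * B + (-u0/r) * A)) by lra.
  assert (F2 : a3 = - ((u0/r) * B + (-v0/r) * A)) by lra.
  assert (F3 : b2 = (-v0/r) * A - (-u0/r) * B) by lra.
  assert (F4' : b3 = (u0/r) * A - (-v0/r) * B) by lra.
  rewrite F1, F2, F3, F4'. unfold r. repeat split; field; exact Hr.
Qed.

Definition h1 t x u v := (u * al t x u v + v * be t x u v) / (u*u+v*v).
Definition h2 t x u v := (u * be t x u v - v * al t x u v) / (u*u+v*v).

Lemma hder_u t x v s : s*s + v*v <> 0 ->
  is_derive (fun z => h1 t x z v) s 0 /\ is_derive (fun z => h2 t x z v) s 0.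
Proof.
  intro Hr.
  destruct (step2 t x s v Hr) as (E1 & _ & E3 & _).
  change (pd 2 al t x s v) with (Derive (fun z => al t x z v) s) in E1.
  change (pd 2 be t x s v) with (Derive (fun z => be t x z v) s) in E3.
  assert (X1 : ex_derive (fun z => al t x z v) s) by exact (proj1 (Sal nil) 2%nat t x s v).
  assert (X2 : ex_derive (fun z => be t x z v) s) by exact (proj1 (Sbe nil) 2%nat t x s v).
  assert (Da : Derive (fun z => al t x z v) s = (s * al t x s v + v * be t x s v) / (s*s+v*v)).
  { apply (Rmult_eq_reg_l (s*s+v*v)); [|exact Hr]. rewrite E1. field. exact Hr. }
  assert (Db : Derive (fun z => be t x z v) s = (s * be t x s v - v * al t x s v) / (s*s+v*v)).
  { apply (Rmult_eq_reg_l (s*s+v*v)); [|exact Hr]. rewrite E3. field. exact Hr. }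
  unfold h1, h2.
  split; auto_derive; try (repeat split; auto; fail); rewrite Da, Db; field; exact Hr.
Qed.

Lemma hder_v t x u s : u*u + s*s <> 0 ->
  is_derive (fun z => h1 t x u z) s 0 /\ is_derive (fun z => h2 t x u z) s 0.
Proof.
  intro Hr.
  destruct (step2 t x u s Hr) as (_ & E2 & _ & E4).
  change (pd 3 al t x u s) with (Derive (fun z => al t x u z) s) in E2.
  change (pd 3 be t x u s) with (Derive (fun z => be t x u z) s) in E4.
  assert (X1 : ex_derive (fun z => al t x u z) s) by exact (proj1 (Sal nil) 3%nat t x u s).
  assert (X2 : ex_derive (fun z => be t x u z) s) by exact (proj1 (Sbe nil) 3%nat t x u s).
  assert (Da : Derive (fun z => al t x u z) s = (s * al t x u s - u * be t x u s) / (u*u+s*s)).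
  { apply (Rmult_eq_reg_l (u*u+s*s)); [|exact Hr]. rewrite E2. field. exact Hr. }
  assert (Db : Derive (fun z => be t x u z) s = (u * al t x u s + s * be t x u s) / (u*u+s*s)).
  { apply (Rmult_eq_reg_l (u*u+s*s)); [|exact Hr]. rewrite E4. field. exact Hr. }
  unfold h1, h2.
  split; auto_derive; try (repeat split; auto; fail); rewrite Da, Db; field; exact Hr.
Qed.


Lemma hor t x v a b : v <> 0 -> h1 t x a v = h1 t x b v /\ h2 t x a v = h2 t x b v.
Proof.
  intro Hv. assert (Hp : forall s, s*s + v*v <> 0).
  { intro s. assert (0 < v*v) by (apply Rsqr_pos_lt; exact Hv). nra. }
  split; [apply (zero_der (fun z => h1 t x z v)) | apply (zero_der (fun z => h2 t x z v))]; intro s; apply (hder_u t x v s (Hp s)).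
Qed.
Lemma ver t x u a b : u <> 0 -> h1 t x u a = h1 t x u b /\ h2 t x u a = h2 t x u b.
Proof.
  intro Hu. assert (Hp : forall s, u*u + s*s <> 0).
  { intro s. assert (0 < u*u) by (apply Rsqr_pos_lt; exact Hu). nra. }
  split; [apply (zero_der (fun z => h1 t x u z)) | apply (zero_der (fun z => h2 t x u z))]; intro s; apply (hder_v t x u s (Hp s)).
Qed.

Lemma hconst t x u v : u*u + v*v <> 0 ->
  h1 t x u v = h1 t x 1 0 /\ h2 t x u v = h2 t x 1 0.
Proof.
  intro Hr.
  assert (H10 : (1:R) <> 0) by lra.
  destruct (Req_dec v 0) as [Ev|Ev].
  - subst v. assert (Hu : u <> 0) by (intro; subst; apply Hr; ring).
    destruct (ver t x u 0 1 Hu) as [A1 A2].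
    destruct (hor t x 1 u 1 H10) as [B1 B2].
    destruct (ver t x 1 1 0 H10) as [C1 C2].
    split; congruence.
  - destruct (hor t x v u 1 Ev) as [A1 A2].
    destruct (ver t x 1 v 0 H10) as [B1 B2].
    split; congruence.
Qed.

Lemma formula t x u v :
  al t x u v = al t x 1 0 * u - be t x 1 0 * v /\ be t x u v = al t x 1 0 * v + be t x 1 0 * u.
Proof.
  assert (G : forall u v, u*u + v*v <> 0 ->
    al t x u v = al t x 1 0 * u - be t x 1 0 * v /\ be t x u v = al t x 1 0 * v + be t x 1 0 * u).
  { intros u' v' Hr. destruct (hconst t x u' v' Hr) as [E1 E2].
    assert (F1 : h1 t x 1 0 = al t x 1 0) by (unfold h1; field).
    assert (F2 : h2 t x 1 0 = be t x 1 0) by (unfold h2; field).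
    rewrite <- F1, <- F2, <- E1, <- E2. unfold h1, h2. split; field; exact Hr. }
  destruct (Req_dec (u*u+v*v) 0) as [E|E]; [|apply G; exact E].
  assert (Hu : u = 0) by nra. assert (Hv : v = 0) by nra. subst u v.
  assert (Hs : forall s, s <> 0 -> s*s + 0*0 <> 0).
  { intros s Hs. assert (0 < s*s) by (apply Rsqr_pos_lt; exact Hs). nra. }
  rewrite (cont_origin (fun s => al t x s 0) (al t x 1 0)).
  rewrite (cont_origin (fun s => be t x s 0) (be t x 1 0)).
  split; ring.
  - exact (proj1 (Sbe nil) 2%nat t x 0 0).
  - intros s H. rewrite (proj2 (G s 0 (Hs s H))). ring.
  - exact (proj1 (Sal nil) 2%nat t x 0 0).
  - intros s H. rewrite (proj1 (G s 0 (Hs s H))). ring.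
Qed.

Let H1 : F2 := fun t x => al t x 1 0.
Let H2 : F2 := fun t x => be t x 1 0.

Lemma E0 t x : - dt H2 t x + dx (dx H1) t x = 0 /\ dt H1 t x + dx (dx H2) t x = 0.
Proof.
  destruct (symR (fun _ _ => 0) (fun _ _ => 0) (fun _ _ => 1) (fun _ _ => 0) t x
    (Smooth2_const 0) (Smooth2_const 0) (Smooth2_const 1) (Smooth2_const 0)) as [E1 E2].
  { unfold Delta1. rewrite dt_const, dxx_const. ring. }
  { unfold Delta2. rewrite dt_const, dxx_const. ring. }
  unfold Red1, Red2 in E1, E2. rewrite dt_c, dxx_c in E1. rewrite dt_c, dxx_c in E2.
  unfold along in E1, E2.
  change (dt H2 t x) with (pd 0 be t x 1 0). change (dt H1 t x) with (pd 0 al t x 1 0).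
  change (dx (dx H1) t x) with (pd 1 (pd 1 al) t x 1 0).
  change (dx (dx H2) t x) with (pd 1 (pd 1 be) t x 1 0).
  split; lra.
Qed.

Lemma step4 t x : dx H1 t x = 0 /\ dx H2 t x = 0.
Proof.
  assert (SU : Smooth2 (fun _ x => exp x)).
  { apply (Smooth4_aff _ 0 0 0 0 0 1). intros; unfold aff; ring. }
  assert (dxU : forall t x, dx (fun _ x => exp x) t x = exp x).
  { intros. unfold dx. apply is_derive_unique. auto_derive; auto; ring. }
  assert (dxxU : dx (dx (fun _ x => exp x)) t x = exp x).
  { rewrite (dx_ext _ (fun _ x => exp x) dxU). apply dxU. }
  destruct (symR (fun _ _ => -1) (fun _ _ => 0) (fun _ x => exp x) (fun _ _ => 0) t x
    (Smooth2_const _) (Smooth2_const 0) SU (Smooth2_const 0)) as [E1 E2].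
  { unfold Delta1. rewrite dt_const, dxxU. ring. }
  { unfold Delta2. rewrite dxx_const. unfold dt. rewrite Derive_const. ring. }
  unfold Red1, Red2 in E1, E2.
  assert (EA : forall t x, along (fun _ x => exp x) (fun _ _ => 0) al t x = H1 t x * exp x).
  { intros. unfold along, H1. rewrite (proj1 (formula t0 x0 (exp x0) 0)). ring. }
  assert (EB : forall t x, along (fun _ x => exp x) (fun _ _ => 0) be t x = H2 t x * exp x).
  { intros. unfold along, H2. rewrite (proj2 (formula t0 x0 (exp x0) 0)). ring. }
  rewrite (dt_ext _ _ EA), (dt_ext _ _ EB), (dxx_ext _ _ EA), (dxx_ext _ _ EB), EA, EB in *.
  assert (XH1 : forall t x, ex_derive (fun s => H1 t s) x) by (intros; exact (proj1 (Sal nil) 1%nat _ _ 1 0)).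
  assert (XH2 : forall t x, ex_derive (fun s => H2 t s) x) by (intros; exact (proj1 (Sbe nil) 1%nat _ _ 1 0)).
  assert (XH1' : forall t x, ex_derive (fun s => dx H1 t s) x) by (intros; exact (proj1 (Sal (1%nat::nil)) 1%nat _ _ 1 0)).
  assert (XH2' : forall t x, ex_derive (fun s => dx H2 t s) x) by (intros; exact (proj1 (Sbe (1%nat::nil)) 1%nat _ _ 1 0)).
  rewrite dte, dxxe in E1 by auto. rewrite dte, dxxe in E2 by auto.
  destruct (E0 t x) as [F1 F2].
  assert (Pe : 0 < exp x) by apply exp_pos.
  split.
  - apply (Rmult_eq_reg_r (exp x)); [|lra]. nra.
  - apply (Rmult_eq_reg_r (exp x)); [|lra]. nra.
Qed.

Lemma Hconst t x : H1 t x = H1 0 0 /\ H2 t x = H2 0 0.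
Proof.
  assert (Dx : forall t x, dx (dx H1) t x = 0 /\ dx (dx H2) t x = 0).
  { intros t' x'. split.
    - rewrite (dx_ext _ (fun _ _ => 0)). apply dx_Z. intros; apply step4.
    - rewrite (dx_ext _ (fun _ _ => 0)). apply dx_Z. intros; apply step4. }
  assert (Dt : forall t x, dt H1 t x = 0 /\ dt H2 t x = 0).
  { intros t' x'. destruct (E0 t' x') as [F1 F2]. destruct (Dx t' x') as [G1 G2]. split; lra. }
  assert (Ix : forall t x, H1 t x = H1 t 0 /\ H2 t x = H2 t 0).
  { intros t' x'. split.
    - apply (zero_der (fun s => H1 t' s)). intro s.
      apply (is_derive_zero (fun s => H1 t' s)). exact (proj1 (Sal nil) 1%nat t' s 1 0). exact (proj1 (step4 t' s)).
    - apply (zero_der (fun s => H2 t' s)). intro s.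
      apply (is_derive_zero (fun s => H2 t' s)). exact (proj1 (Sbe nil) 1%nat t' s 1 0). exact (proj2 (step4 t' s)). }
  assert (It : forall t, H1 t 0 = H1 0 0 /\ H2 t 0 = H2 0 0).
  { intros t'. split.
    - apply (zero_der (fun s => H1 s 0)). intro s.
      apply (is_derive_zero (fun s => H1 s 0)). exact (proj1 (Sal nil) 0%nat s 0 1 0). exact (proj1 (Dt s 0)).
    - apply (zero_der (fun s => H2 s 0)). intro s.
      apply (is_derive_zero (fun s => H2 s 0)). exact (proj1 (Sbe nil) 0%nat s 0 1 0). exact (proj2 (Dt s 0)). }
  destruct (Ix t x) as [A1 A2]. destruct (It t) as [B1 B2]. split; congruence.
Qed.

Theorem forward : in_span_M_I tau xi al be.
Proof.
  exists (be 0 0 1 0), (al 0 0 1 0). intros t x u v.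
  destruct (Hconst t x) as [C1 C2]. unfold H1, H2 in C1, C2.
  destruct (formula t x u v) as [F1 F2].
  split; [apply Ht|split; [apply Hx|]].
  rewrite F1, F2, C1, C2. split; ring.
Qed.
End Fwd2.

Theorem proposition1 (tau xi al be : F4) :
  in_kernel tau xi al be <-> in_span_M_I tau xi al be.
Proof.
  split. apply forward. apply backward.
Qed.
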